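(* If $K$ is a separably determined compact line and $L$ is a closed subset of $K$, then $L$ (with the induced order) is a separably determined compact line.
   Context: A compact line is a totally ordered set which is compact in its order topology. For a compact line $H$, $H^+$ is the set of right-isolated points ($\max H$ or points with an immediate successor in $H$). $\mathrm{NBV}(K)$ is the space of right-continuous real maps of bounded variation on $K$, identified with $C(K)^*$ via $F_\mu(t)=\mu([\min K,t])$. $\lim_{i\in I}a_i=0$ means $\{i:|a_i|\ge\varepsilon\}$ is finite for every $\varepsilon>0$; $c_0(I)$ is the set of such families. $(F_i)_{i\in I}$ is weak*-null if $\lim_i\int f\,d\mu_i=0$ for all $f\in C(K)$. $(F_i)$ is of type $c_0\ell_1$ over $Q$ if $F_i(t)=a_{i,t}+b_{i,t}$ with $\lim_ia_{i,t}=0$ for each $t\in Q$ and $\sup_i\sum_{t\in Q}|b_{i,t}|<\infty$. A compact line $K$ is separably determined if for every weak*-null family $(F_i)_{i\in I}$ in $\mathrm{NBV}(K)$ and every $Q\subseteq K$: whenever $\{t\in Q\cap(H\setminus H^+):(F_i(t))_{i\in I}\notin c_0(I)\}$ is countable for every closed separable $H\subseteq K$, the family is of type $c_0\ell_1$ over $Q$. *)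

(* Defs.v *)
From Stdlib Require Import Reals List.
Import ListNotations.
Open Scope R_scope.

Set Implicit Arguments.

Section Defs.
Variables (T : Type) (le : T -> T -> Prop).

Definition lt (x y : T) : Prop := le x y /\ x <> y.

Definition total_order : Prop :=
  (forall x, le x x) /\
  (forall x y, le x y -> le y x -> x = y) /\
  (forall x y z, le x y -> le y z -> le x z) /\
  (forall x y, le x y \/ le y x).

Definition is_least (x : T) : Prop := forall y, le x y.
Definition is_greatest (x : T) : Prop := forall y, le y x.

(** Open sets of the order topology: every point has a basic order
    neighbourhood (a,b), [min,b), (a,max] or the whole space inside U. *)
Definition order_open (U : T -> Prop) : Prop :=
  forall x, U x ->
    (is_least x \/ exists a, lt a x /\ forall y, lt a y -> le y x -> U y) /\
    (is_greatest x \/ exists b, lt x b /\ forall y, le x y -> lt y b -> U y).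

Definition order_closed (C : T -> Prop) : Prop :=
  order_open (fun x => ~ C x).

Definition order_compact : Prop :=
  forall (J : Type) (U : J -> T -> Prop),
    (forall j, order_open (U j)) ->
    (forall x, exists j, U j x) ->
    exists s : list J, forall x, exists j, In j s /\ U j x.

Definition compact_line : Prop := total_order /\ order_compact.

Definition order_closure (D : T -> Prop) (x : T) : Prop :=
  forall U, order_open U -> U x -> exists y, D y /\ U y.

Definition countable_set (D : T -> Prop) : Prop :=
  exists g : T -> nat, forall x y, D x -> D y -> g x = g y -> x = y.

(** A subset H is separable (in the subspace topology): it has a countable
    subset whose closure contains H.  (Used for closed H.) *)
Definition separable_set (H : T -> Prop) : Prop :=
  exists D : T -> Prop, (forall x, D x -> H x) /\ countable_set D /\
    (forall x, H x -> order_closure D x).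

Definition right_isolated_in (H : T -> Prop) (t : T) : Prop :=
  H t /\
  ((forall y, H y -> le y t) \/
   (exists s, H s /\ lt t s /\ ~ (exists u, H u /\ lt t u /\ lt u s))).

Definition order_continuous (f : T -> R) : Prop :=
  forall x eps, 0 < eps ->
    exists U, order_open U /\ U x /\ forall y, U y -> Rabs (f y - f x) < eps.

Definition right_continuous (F : T -> R) : Prop :=
  forall t eps, 0 < eps ->
    is_greatest t \/
    exists b, lt t b /\ forall y, le t y -> lt y b -> Rabs (F y - F t) < eps.

Fixpoint incr_from (prev : T) (l : list T) : Prop :=
  match l with
  | [] => True
  | x :: r => lt prev x /\ incr_from x r
  end.

Fixpoint variation_from (F : T -> R) (prev : T) (l : list T) : R :=
  match l with
  | [] => 0
  | x :: r => Rabs (F x - F prev) + variation_from F x r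
  end.

Definition bounded_variation (F : T -> R) : Prop :=
  exists M, forall t0 l, incr_from t0 l -> variation_from F t0 l <= M.

Definition NBV (F : T -> R) : Prop := right_continuous F /\ bounded_variation F.

(** Tagged partitions  min = t0 < t1 < ... < tn = max,
    tags tau_k in (t_{k-1}, t_k]; represented as t0 and the list of (t_k, tau_k). *)
Fixpoint tags_ok (prev : T) (l : list (T * T)) : Prop :=
  match l with
  | [] => True
  | (t, tau) :: r => lt prev t /\ lt prev tau /\ le tau t /\ tags_ok t r
  end.

Definition tagged_partition (t0 : T) (l : list (T * T)) : Prop :=
  is_least t0 /\ tags_ok t0 l /\ is_greatest (last (t0 :: map fst l) t0).

Definition partition_points (t0 : T) (l : list (T * T)) : list T :=
  t0 :: map fst l.

Fixpoint rs_tail (f F : T -> R) (prev : T) (l : list (T * T)) : R :=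
  match l with
  | [] => 0
  | (t, tau) :: r => f tau * (F t - F prev) + rs_tail f F t r
  end.

(** Riemann-Stieltjes sum for the measure mu with F = F_mu:
    f(min) mu({min}) + sum_k f(tau_k) mu((t_{k-1}, t_k]). *)
Definition rs_sum (f F : T -> R) (t0 : T) (l : list (T * T)) : R :=
  f t0 * F t0 + rs_tail f F t0 l.

(** [v] is the integral of f w.r.t. the measure mu corresponding to F
    (limit of Riemann-Stieltjes sums along refinement of partitions). *)
Definition is_rs_integral (f F : T -> R) (v : R) : Prop :=
  forall eps, 0 < eps ->
    exists t0 l0, tagged_partition t0 l0 /\
      forall t1 l1, tagged_partition t1 l1 ->
        (forall x, In x (partition_points t0 l0) -> In x (partition_points t1 l1)) ->
        Rabs (rs_sum f F t1 l1 - v) < eps.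

End Defs.

Definition finite_set (I : Type) (P : I -> Prop) : Prop :=
  exists s : list I, forall i, P i -> In i s.

Definition c0 (I : Type) (a : I -> R) : Prop :=
  forall eps, 0 < eps -> finite_set (fun i => eps <= Rabs (a i)).

(** weak*-null family in NBV(K) = C(K)^*. *)
Definition weak_star_null (T : Type) (le : T -> T -> Prop) (I : Type)
  (F : I -> T -> R) : Prop :=
  forall f, order_continuous le f ->
    exists a : I -> R, (forall i, is_rs_integral le f (F i) (a i)) /\ c0 a.

Fixpoint sum_abs (T : Type) (g : T -> R) (l : list T) : R :=
  match l with [] => 0 | x :: r => Rabs (g x) + sum_abs g r end.

Definition type_c0l1 (T I : Type) (F : I -> T -> R) (Q : T -> Prop) : Prop :=
  exists (a b : I -> T -> R),
    (forall i t, Q t -> F i t = a i t + b i t) /\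
    (forall t, Q t -> c0 (fun i => a i t)) /\
    (exists M, forall i (l : list T), NoDup l -> (forall t, In t l -> Q t) ->
        sum_abs (b i) l <= M).

Definition separably_determined (T : Type) (le : T -> T -> Prop) : Prop :=
  forall (I : Type) (F : I -> T -> R),
    (forall i, NBV le (F i)) ->
    weak_star_null le F ->
    forall Q : T -> Prop,
      (forall H : T -> Prop, order_closed le H -> separable_set le H ->
         countable_set (fun t => Q t /\ H t /\ ~ right_isolated_in le H t /\
                                 ~ c0 (fun i => F i t))) ->
      type_c0l1 F Q.

Definition induced (T : Type) (le : T -> T -> Prop) (L : T -> Prop)
  : {x : T | L x} -> {x : T | L x} -> Prop :=
  fun x y => le (proj1_sig x) (proj1_sig y).

(* Main.v *)
Require Import Defs.
From Stdlib Require Import Reals List.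
From Stdlib Require Import Lra Lia Classical ClassicalEpsilon ProofIrrelevance FunctionalExtensionality.
Import ListNotations.
Open Scope R_scope.
Set Implicit Arguments.
Unset Strict Implicit.



Section Gen.
Variables (T : Type) (le : T -> T -> Prop).
Hypothesis Htot : total_order le.

Lemma le_refl x : le x x. Proof. apply Htot. Qed.
Lemma le_anti x y : le x y -> le y x -> x = y. Proof. apply Htot. Qed.
Lemma le_trans x y z : le x y -> le y z -> le x z. Proof. apply Htot. Qed.
Lemma le_total x y : le x y \/ le y x. Proof. apply Htot. Qed.

Lemma lt_le x y : lt le x y -> le x y. Proof. now intros [? ?]. Qed.
Lemma lt_not_le x y : lt le x y -> ~ le y x.
Proof. intros [h1 h2] h3. apply h2, le_anti; auto. Qed.
Lemma not_le_lt x y : ~ le x y -> lt le y x.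
Proof. intros h. destruct (le_total x y); [tauto|]. split; auto. intros ->. apply h, le_refl. Qed.
Lemma lt_irrefl x : ~ lt le x x. Proof. intros [_ h]; auto. Qed.
Lemma lt_le_trans x y z : lt le x y -> le y z -> lt le x z.
Proof. intros h1 h2. split. eapply le_trans; eauto using lt_le. intros ->. apply (lt_not_le h1 h2). Qed.
Lemma le_lt_trans x y z : le x y -> lt le y z -> lt le x z.
Proof. intros h1 h2. split. eapply le_trans; eauto using lt_le. intros ->. apply (lt_not_le h2 h1). Qed.
Lemma lt_trans x y z : lt le x y -> lt le y z -> lt le x z.
Proof. intros h1 h2. eapply lt_le_trans; eauto using lt_le. Qed.
Lemma le_or_lt x y : le x y \/ lt le y x.
Proof. destruct (classic (le x y)); auto using not_le_lt. Qed.
Lemma lt_mk x y : le x y -> x <> y -> lt le x y. Proof. now split. Qed.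

Lemma not_greatest x : ~ is_greatest le x -> exists b, lt le x b.
Proof. intros h. apply not_all_ex_not in h as [y hy]. exists y. now apply not_le_lt. Qed.
Lemma not_least x : ~ is_least le x -> exists a, lt le a x.
Proof. intros h. apply not_all_ex_not in h as [y hy]. exists y. now apply not_le_lt. Qed.

Lemma open_ext U V : (forall x, U x <-> V x) -> order_open le U -> order_open le V.
Proof.
  intros e h x hx. apply e in hx. destruct (h x hx) as [h1 h2]. split.
  - destruct h1 as [h1|[a [ha h']]]; [now left|right; exists a; split; auto; intros; apply e; auto].
  - destruct h2 as [h3|[a [ha h']]]; [now left|right; exists a; split; auto; intros; apply e; auto].
Qed.

Lemma open_gt a : order_open le (fun y => lt le a y).
Proof.
  intros x hx. split.
  - right. exists a. split; auto.
  - destruct (classic (is_greatest le x)) as [g|g]; [now left|right].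
    destruct (not_greatest g) as [b hb]. exists b. split; auto.
    intros y h1 h2. eapply lt_le_trans; eauto.
Qed.

Lemma open_lt b : order_open le (fun y => lt le y b).
Proof.
  intros x hx. split.
  - destruct (classic (is_least le x)) as [g|g]; [now left|right].
    destruct (not_least g) as [a ha]. exists a. split; auto.
    intros y h1 h2. eapply le_lt_trans; eauto.
  - right. exists b. split; auto.
Qed.

Lemma open_empty : order_open le (fun _ => False).
Proof. intros x []. Qed.
Lemma open_full : order_open le (fun _ => True).
Proof. intros x _. split.
  - destruct (classic (is_least le x)) as [g|g]; [now left|right].
    destruct (not_least g) as [a ha]. exists a. split; auto.
  - destruct (classic (is_greatest le x)) as [g|g]; [now left|right].
    destruct (not_greatest g) as [a ha]. exists a. split; auto.
Qed.

Lemma open_or U V : order_open le U -> order_open le V -> order_open le (fun x => U x \/ V x).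
Proof.
  intros hU hV x [hx|hx].
  - destruct (hU x hx) as [h1 h2]. split.
    + destruct h1 as [h1|[a [ha h']]]; [now left|right; exists a; split; auto].
    + destruct h2 as [h3|[a [ha h']]]; [now left|right; exists a; split; auto].
  - destruct (hV x hx) as [h1 h2]. split.
    + destruct h1 as [h1|[a [ha h']]]; [now left|right; exists a; split; auto].
    + destruct h2 as [h3|[a [ha h']]]; [now left|right; exists a; split; auto].
Qed.

Lemma open_and U V : order_open le U -> order_open le V -> order_open le (fun x => U x /\ V x).
Proof.
  intros hU hV x [hx hx']. destruct (hU x hx) as [h1 h2]. destruct (hV x hx') as [k1 k2]. split.
  - destruct h1 as [h1|[a [ha h']]]; [now left|].
    destruct k1 as [k1|[b [hb k']]]; [now left|right].
    destruct (le_total a b).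
    + exists b. split; auto. intros y y1 y2. split; [apply h'|apply k']; auto. eapply le_lt_trans; eauto.
    + exists a. split; auto. intros y y1 y2. split; [apply h'|apply k']; auto. eapply le_lt_trans; eauto.
  - destruct h2 as [h3|[a [ha h']]]; [now left|].
    destruct k2 as [k3|[b [hb k']]]; [now left|right].
    destruct (le_total a b).
    + exists a. split; auto. intros y y1 y2. split; [apply h'|apply k']; auto. eapply lt_le_trans; eauto.
    + exists b. split; auto. intros y y1 y2. split; [apply h'|apply k']; auto. eapply lt_le_trans; eauto.
Qed.

Lemma open_lt_if (P : Prop) b : order_open le (fun y => P /\ lt le y b).
Proof.
  destruct (classic P) as [p|p].
  - eapply open_ext; [|apply (@open_lt b)]. intros x; simpl; tauto.
  - eapply open_ext; [|apply open_empty]. intros x; simpl; tauto.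
Qed.
Lemma open_gt_if (P : Prop) b : order_open le (fun y => P /\ lt le b y).
Proof.
  destruct (classic P) as [p|p].
  - eapply open_ext; [|apply (@open_gt b)]. intros x; simpl; tauto.
  - eapply open_ext; [|apply open_empty]. intros x; simpl; tauto.
Qed.

Lemma closed_and C D : order_closed le C -> order_closed le D -> order_closed le (fun x => C x /\ D x).
Proof.
  intros h1 h2. unfold order_closed. eapply open_ext; [|apply (open_or h1 h2)].
  intros x; simpl; tauto.
Qed.
Lemma closed_ge s : order_closed le (fun y => le s y).
Proof.
  unfold order_closed. eapply open_ext; [|apply (@open_lt s)]. intros x; simpl. split.
  - intros h h'. eapply lt_not_le; eauto.
  - apply not_le_lt.
Qed.
Lemma closed_le s : order_closed le (fun y => le y s).
Proof.
  unfold order_closed. eapply open_ext; [|apply (@open_gt s)]. intros x; simpl. split.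
  - intros h h'. eapply lt_not_le; eauto.
  - apply not_le_lt.
Qed.
Lemma closed_full : order_closed le (fun _ => True).
Proof. unfold order_closed. eapply open_ext; [|apply open_empty]. intros; simpl; tauto. Qed.

Hypothesis Hcomp : order_compact le.

Lemma closed_has_max C : order_closed le C -> (exists x, C x) ->
  exists m, C m /\ forall y, C y -> le y m.
Proof.
  intros hC [x0 hx0]. apply NNPP. intros hno.
  assert (hs : forall m, C m -> exists y, C y /\ lt le m y).
  { intros m hm. apply NNPP. intros hn. apply hno. exists m. split; auto.
    intros y hy. destruct (le_or_lt y m) as [?|h]; auto. exfalso. apply hn. eauto. }
  set (U := fun (j : option T) (x : T) => match j with Some s => C s /\ lt le x s | None => ~ C x end).
  destruct (@Hcomp (option T) U) as [s hs'].
  - intros [s|]; simpl. apply open_lt_if. apply hC.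
  - intros x. destruct (classic (C x)) as [h|h].
    + destruct (hs x h) as [y [hy1 hy2]]. exists (Some y). simpl; auto.
    + exists None. simpl; auto.
  - assert (key : forall l : list (option T), exists m, C m /\ forall j, In j l -> ~ U j m).
    { induction l as [|j l IH].
      - exists x0. split; [exact hx0|intros j []].
      - destruct IH as [m [hm hm']]. destruct j as [s0|].
        + destruct (classic (C s0)) as [c|c].
          * destruct (le_total m s0) as [h|h].
            -- exists s0. split; auto. intros j [<-|hj]; simpl.
               ++ intros [_ h']. eapply lt_irrefl; eauto.
               ++ intros hu. apply (hm' j hj). destruct j as [s'|]; simpl in *.
                  ** destruct hu; split; auto. eapply le_lt_trans; eauto.
                  ** auto.
            -- exists m. split; auto. intros j [<-|hj]; simpl; auto.
               intros [_ h']. eapply lt_not_le; eauto.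
          * exists m. split; auto. intros j [<-|hj]; simpl; auto. tauto.
        + exists m. split; auto. intros j [<-|hj]; simpl; auto. }
    destruct (key s) as [m [hm hm']]. destruct (hs' m) as [j [hj hj']]. eapply hm'; eauto.
Qed.

Lemma closed_has_min C : order_closed le C -> (exists x, C x) ->
  exists m, C m /\ forall y, C y -> le m y.
Proof.
  intros hC [x0 hx0]. apply NNPP. intros hno.
  assert (hs : forall m, C m -> exists y, C y /\ lt le y m).
  { intros m hm. apply NNPP. intros hn. apply hno. exists m. split; auto.
    intros y hy. destruct (le_or_lt m y) as [?|h]; auto. exfalso. apply hn. eauto. }
  set (U := fun (j : option T) (x : T) => match j with Some s => C s /\ lt le s x | None => ~ C x end).
  destruct (@Hcomp (option T) U) as [s hs'].
  - intros [s|]; simpl. apply open_gt_if. apply hC.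
  - intros x. destruct (classic (C x)) as [h|h].
    + destruct (hs x h) as [y [hy1 hy2]]. exists (Some y). simpl; auto.
    + exists None. simpl; auto.
  - assert (key : forall l : list (option T), exists m, C m /\ forall j, In j l -> ~ U j m).
    { induction l as [|j l IH].
      - exists x0. split; [exact hx0|intros j []].
      - destruct IH as [m [hm hm']]. destruct j as [s0|].
        + destruct (classic (C s0)) as [c|c].
          * destruct (le_total s0 m) as [h|h].
            -- exists s0. split; auto. intros j [<-|hj]; simpl.
               ++ intros [_ h']. eapply lt_irrefl; eauto.
               ++ intros hu. apply (hm' j hj). destruct j as [s'|]; simpl in *.
                  ** destruct hu; split; auto. eapply lt_le_trans; eauto.
                  ** auto.
            -- exists m. split; auto. intros j [<-|hj]; simpl; auto.
               intros [_ h']. eapply lt_not_le; eauto.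
          * exists m. split; auto. intros j [<-|hj]; simpl; auto. tauto.
        + exists m. split; auto. intros j [<-|hj]; simpl; auto. }
    destruct (key s) as [m [hm hm']]. destruct (hs' m) as [j [hj hj']]. eapply hm'; eauto.
Qed.

End Gen.



Section Gen2.
Variables (T : Type) (le : T -> T -> Prop).
Hypothesis Htot : total_order le.

Lemma open_union V : (forall x, V x -> exists U, order_open le U /\ U x /\ forall y, U y -> V y) ->
  order_open le V.
Proof.
  intros h x hx. destruct (h x hx) as [U [hU [hUx hUV]]]. destruct (hU x hUx) as [h1 h2]. split.
  - destruct h1 as [h1|[a [ha h']]]; [now left|right; exists a; split; auto].
  - destruct h2 as [h3|[a [ha h']]]; [now left|right; exists a; split; auto].
Qed.

Lemma closure_closed D : order_closed le (order_closure le D).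
Proof.
  unfold order_closed. apply open_union. intros x hx.
  unfold order_closure in hx. apply not_all_ex_not in hx as [U hU].
  apply imply_to_and in hU as [hop hU]. apply imply_to_and in hU as [hUx hno].
  exists U. split; [exact hop|]. split; [exact hUx|].
  intros y hy hc. destruct (hc U hop hy) as [z [hz1 hz2]]. eauto.
Qed.

Lemma closure_incl (D : T -> Prop) x : D x -> order_closure le D x.
Proof. intros h U _ hU. eauto. Qed.

Definition in_iv (ao bo : option T) (y : T) : Prop :=
  (match ao with Some a => lt le a y | None => True end) /\
  (match bo with Some b => lt le y b | None => True end).

Lemma open_iv ao bo : order_open le (in_iv ao bo).
Proof.
  unfold in_iv. apply open_and; auto.
  - destruct ao; [apply open_gt; auto|apply open_full; auto].
  - destruct bo; [apply open_lt; auto|apply open_full; auto].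
Qed.

Lemma open_to_iv U x : order_open le U -> U x ->
  exists ao bo, in_iv ao bo x /\ forall y, in_iv ao bo y -> U y.
Proof.
  intros hU hx. destruct (hU x hx) as [[h1|[a [ha h1]]] [h2|[b [hb h2]]]].
  - exists None, None. split. split; auto. intros y _.
    destruct (le_total Htot x y). replace y with x; auto. apply (le_anti Htot); auto.
    replace y with x; auto. apply (le_anti Htot); auto.
  - exists None, (Some b). split. split; simpl; auto. intros y [_ hy]. simpl in hy.
    destruct (le_total Htot x y). apply h2; auto. replace y with x; auto. apply (le_anti Htot); auto.
  - exists (Some a), None. split. split; simpl; auto. intros y [hy _]. simpl in hy.
    destruct (le_total Htot x y). replace y with x; auto. apply (le_anti Htot); auto. apply h1; auto.
  - exists (Some a), (Some b). split. split; simpl; auto. intros y [hy hy']. simpl in hy, hy'.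
    destruct (le_total Htot x y). apply h2; auto. apply h1; auto.
Qed.

Definition opt_list (o : option T) : list T := match o with Some a => [a] | None => [] end.

Hypothesis Hcomp : order_compact le.

Lemma osc_partition (f : T -> R) eps : order_continuous le f -> 0 < eps ->
  exists S : list T, forall a b, (forall s, In s S -> ~ (lt le a s /\ lt le s b)) ->
    forall y z, lt le a y -> le y b -> lt le a z -> le z b -> Rabs (f y - f z) < eps.
Proof.
  intros hf he.
  set (P := fun p : T * option T * option T => let '(x, ao, bo) := p in
              in_iv ao bo x /\ forall y, in_iv ao bo y -> Rabs (f y - f x) < eps / 2).
  set (J := {p | P p}).
  set (U := fun (j : J) => let '(x, ao, bo) := proj1_sig j in in_iv ao bo).
  destruct (@Hcomp J U) as [s hs].
  - intros [[[x ao] bo] hp]. unfold U; simpl. apply open_iv.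
  - intros x. destruct (hf x (eps/2)) as [V [hV [hVx hV']]]; [lra|].
    destruct (@open_to_iv V x hV hVx) as [ao [bo [h1 h2]]].
    assert (hp : P (x, ao, bo)). { split; auto. }
    exists (exist _ (x, ao, bo) hp). unfold U; simpl. auto.
  - exists (flat_map (fun j : J => let '(x, ao, bo) := proj1_sig j in opt_list ao ++ opt_list bo) s).
    intros a b hS y z hy1 hy2 hz1 hz2.
    destruct (hs b) as [j [hj hb]]. destruct j as [p hp]. destruct p as [[x ao] bo]. unfold U in hb; simpl in hb.
    assert (hp2 := proj2 hp). simpl in hp2.
    assert (hin : forall w, lt le a w -> le w b -> in_iv ao bo w).
    { intros w hw1 hw2. destruct hb as [hb1 hb2]. split.
      - destruct ao as [a'|]; auto.
        destruct (le_or_lt Htot a' a) as [h|h].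
        + eapply le_lt_trans; eauto.
        + exfalso. apply (hS a'); auto. apply in_flat_map. eexists; split; [exact hj|]. simpl. auto with datatypes.
      - destruct bo as [b'|]; auto. eapply le_lt_trans; eauto. }
    pose proof (hp2 y (hin y hy1 hy2)). pose proof (hp2 z (hin z hz1 hz2)).
    replace (f y - f z) with ((f y - f x) - (f z - f x)) by ring.
    eapply Rle_lt_trans; [apply Rabs_triang|]. rewrite Rabs_Ropp. lra.
Qed.

Lemma last_cons (x : T) l d : last (x :: l) d = last l x.
Proof. revert x d. induction l as [|y l IH]; intros x d; [reflexivity|].
  change (last (y :: l) d = last (y :: l) x). rewrite !IH. auto. Qed.

Lemma incr_insert pts : forall t0, incr_from le t0 pts -> forall p, lt le t0 p -> le p (last pts t0) ->
  exists pts', incr_from le t0 pts' /\ (forall x, In x pts -> In x pts') /\ In p pts' /\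
    last pts' t0 = last pts t0.
Proof.
  induction pts as [|x r IH]; intros t0 hi p hp hl.
  - simpl in hl. exfalso. eapply lt_not_le; eauto.
  - destruct hi as [hx hr]. destruct (le_or_lt Htot x p) as [h|h].
    + destruct (classic (x = p)) as [e|e].
      * subst. exists (p :: r). split; [split; auto|]. split; [auto|]. split; [simpl; auto|reflexivity].
      * assert (hl' : le p (last r x)). { rewrite last_cons in hl. auto. }
        destruct (IH x hr p (lt_mk h e) hl') as [r' [h1 [h2 [h3 h4]]]].
        exists (x :: r'). split; [split; auto|]. split.
        { intros y [<-|hy]; simpl; auto. }
        split; [simpl; auto|].
        rewrite !last_cons. auto.
    + exists (p :: x :: r). split; [split; auto; split; auto|]. split; [simpl; auto|]. split; simpl; auto.
Qed.

Lemma exist_pts m0 M0 (S : list T) : is_least le m0 -> is_greatest le M0 ->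
  exists pts, incr_from le m0 pts /\ (forall x, In x S -> x = m0 \/ In x pts) /\ last pts m0 = M0.
Proof.
  intros hm hM. induction S as [|x S IH].
  - destruct (classic (m0 = M0)) as [e|e].
    + exists []. simpl. auto.
    + exists [M0]. simpl. split; [split; auto; split; auto|]. auto.
  - destruct IH as [pts [h1 [h2 h3]]]. destruct (classic (x = m0)) as [e|e].
    + exists pts. split; auto. split; auto. intros y [<-|hy]; auto.
    + destruct (@incr_insert pts m0 h1 x) as [pts' [k1 [k2 [k3 k4]]]].
      * apply lt_mk; auto.
      * rewrite h3. apply hM.
      * exists pts'. split; auto. split; [|congruence]. intros y [<-|hy]; auto.
        destruct (h2 y hy); auto.
Qed.

Lemma tags_diag pts : forall t0, incr_from le t0 pts -> tags_ok le t0 (map (fun x => (x, x)) pts).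
Proof.
  induction pts as [|x r IH]; intros t0 h; simpl; auto. destruct h. split; [auto|split; [auto|split; [apply (le_refl Htot)|auto]]].
Qed.

Lemma tags_ok_gt l : forall prev, tags_ok le prev l -> forall x, In x (map fst l) -> lt le prev x.
Proof.
  induction l as [|[t tau] r IH]; intros prev h x hx; simpl in *; [tauto|].
  destruct h as [h1 [h2 [h3 h4]]]. destruct hx as [<-|hx]; auto.
  exact (lt_trans Htot h1 (IH _ h4 _ hx)).
Qed.

Lemma incr_gt l : forall prev, incr_from le prev l -> forall x, In x l -> lt le prev x.
Proof.
  induction l as [|t r IH]; intros prev h x hx; simpl in *; [tauto|].
  destruct h as [h1 h4]. destruct hx as [<-|hx]; auto.
  exact (lt_trans Htot h1 (IH _ h4 _ hx)).
Qed.

End Gen2.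



Section Sub.
Variables (T : Type) (le : T -> T -> Prop) (L : T -> Prop).
Hypothesis Htot : total_order le.
Hypothesis Hcomp : order_compact le.
Hypothesis HL : order_closed le L.

Local Notation Ls := {x : T | L x}.
Local Notation leL := (induced le L).
Local Notation "` x" := (proj1_sig x) (at level 5).

Lemma sig_eq (x y : Ls) : ` x = ` y -> x = y.
Proof. destruct x as [x hx], y as [y hy]; simpl. intros ->. f_equal. apply proof_irrelevance. Qed.

Lemma totL : total_order leL.
Proof.
  unfold induced. split; [|split; [|split]].
  - intros x; apply (le_refl Htot).
  - intros x y h1 h2. apply sig_eq. apply (le_anti Htot); auto.
  - intros x y z; apply (le_trans Htot).
  - intros x y; apply (le_total Htot).
Qed.

Lemma ltL (x y : Ls) : lt leL x y <-> lt le (` x) (` y).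
Proof.
  unfold lt, induced. split; intros [h1 h2]; split; auto.
  - intros e. apply h2. apply sig_eq; auto.
  - intros e. apply h2. congruence.
Qed.

Lemma trace_open (U : T -> Prop) : order_open le U -> order_open leL (fun x : Ls => U (` x)).
Proof.
  intros hU x hx. destruct (hU _ hx) as [hl hr]. split.
  - destruct hl as [hl|[a [ha ha']]].
    + left. intros y. apply hl.
    + destruct (classic (exists l : Ls, lt le a (` l) /\ lt le (` l) (` x))) as [[l [hl1 hl2]]|n1].
      * right. exists l. split; [apply ltL; auto|]. intros y hy1 hy2. apply ltL in hy1.
        apply ha'; auto. exact (lt_trans Htot hl1 hy1).
      * destruct (classic (exists l : Ls, lt le (` l) (` x))) as [[l hl]|n2].
        -- destruct (closed_has_max Htot Hcomp (C := fun t => L t /\ le t a)) as [m [[hm1 hm2] hm3]].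
           ++ apply closed_and; auto. apply closed_le; auto.
           ++ exists (` l). split; [exact (proj2_sig l)|]. destruct (le_or_lt Htot (` l) a) as [h|h]; auto.
              exfalso. apply n1. eauto.
           ++ right. exists (exist _ m hm1). split.
              ** apply ltL; simpl. exact (le_lt_trans Htot hm2 ha).
              ** intros y hy1 hy2. apply ltL in hy1; simpl in hy1. unfold induced in hy2.
                 destruct (le_or_lt Htot (` y) a) as [h|h].
                 --- exfalso. apply (lt_not_le Htot hy1). apply hm3. split; auto. exact (proj2_sig y).
                 --- apply ha'; auto.
        -- left. intros y. unfold induced. destruct (le_or_lt Htot (` x) (` y)) as [h|h]; auto.
           exfalso. apply n2. eauto.
  - destruct hr as [hr|[a [ha ha']]].
    + left. intros y. apply hr.
    + destruct (classic (exists l : Ls, lt le (` x) (` l) /\ lt le (` l) a)) as [[l [hl1 hl2]]|n1].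
      * right. exists l. split; [apply ltL; auto|]. intros y hy1 hy2. apply ltL in hy2.
        apply ha'; auto. exact (lt_trans Htot hy2 hl2).
      * destruct (classic (exists l : Ls, lt le (` x) (` l))) as [[l hl0]|n2].
        -- destruct (closed_has_min Htot Hcomp (C := fun t => L t /\ le a t)) as [m [[hm1 hm2] hm3]].
           ++ apply closed_and; auto. apply closed_ge; auto.
           ++ exists (` l). split; [exact (proj2_sig l)|]. destruct (le_or_lt Htot a (` l)) as [h|h]; auto.
              exfalso. apply n1. eauto.
           ++ right. exists (exist _ m hm1). split.
              ** apply ltL; simpl. exact (lt_le_trans Htot ha hm2).
              ** intros y hy1 hy2. apply ltL in hy2; simpl in hy2. unfold induced in hy1.
                 destruct (le_or_lt Htot a (` y)) as [h|h].
                 --- exfalso. apply (lt_not_le Htot hy2). apply hm3. split; auto. exact (proj2_sig y).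
                 --- apply ha'; auto.
        -- left. intros y. unfold induced. destruct (le_or_lt Htot (` y) (` x)) as [h|h]; auto.
           exfalso. apply n2. eauto.
Qed.

Lemma lift_open (U : Ls -> Prop) (x : Ls) : order_open leL U -> U x ->
  exists W, order_open le W /\ W (` x) /\ forall y : Ls, W (` y) -> U y.
Proof.
  intros hU hx. destruct (hU x hx) as [hl hr].
  assert (hA : exists ao, (match ao with Some a => lt le a (` x) | None => True end) /\
     forall y : Ls, (match ao with Some a => lt le a (` y) | None => True end) -> le (` y) (` x) -> U y).
  { destruct hl as [hl|[a [ha ha']]].
    - exists None. split; auto. intros y _ hy. replace y with x; auto. apply sig_eq. apply (le_anti Htot); auto. apply hl.
    - exists (Some (` a)). split; [apply ltL; auto|]. intros y hy1 hy2. apply ha'; auto. apply ltL; auto. }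
  assert (hB : exists bo, (match bo with Some b => lt le (` x) b | None => True end) /\
     forall y : Ls, (match bo with Some b => lt le (` y) b | None => True end) -> le (` x) (` y) -> U y).
  { destruct hr as [hr|[a [ha ha']]].
    - exists None. split; auto. intros y _ hy. replace y with x; auto. apply sig_eq. apply (le_anti Htot); auto. apply hr.
    - exists (Some (` a)). split; [apply ltL; auto|]. intros y hy1 hy2. apply ha'; auto. apply ltL; auto. }
  destruct hA as [ao [ha1 ha2]]. destruct hB as [bo [hb1 hb2]].
  exists (in_iv le ao bo). split; [apply open_iv; auto|]. split; [split; auto|].
  intros y [hy1 hy2]. destruct (le_total Htot (` y) (` x)); auto.
Qed.

Lemma compactL : order_compact leL.
Proof.
  intros J U hU hcov.
  set (V := fun (o : option J) (t : T) => match o with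
       | Some j => exists W, order_open le W /\ W t /\ forall y : Ls, W (` y) -> U j y
       | None => ~ L t end).
  destruct (@Hcomp (option J) V) as [s hs].
  - intros [j|]; simpl; [|exact HL]. apply open_union; auto.
    intros t [W [h1 [h2 h3]]]. exists W. split; auto. split; auto. intros y hy. exists W. auto.
  - intros t. destruct (classic (L t)) as [h|h].
    + destruct (hcov (exist _ t h)) as [j hj]. destruct (lift_open (hU j) hj) as [W [h1 [h2 h3]]].
      exists (Some j). simpl. exists W. auto.
    + exists None. simpl. auto.
  - exists (flat_map (fun o => match o with Some j => [j] | None => [] end) s).
    intros x. destruct (hs (` x)) as [[j|] [hj hv]].
    + exists j. split. apply in_flat_map. exists (Some j). simpl; auto.
      destruct hv as [W [h1 [h2 h3]]]. auto.
    + exfalso. apply hv. exact (proj2_sig x).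
Qed.

Lemma compact_line_L : compact_line leL.
Proof. split; [apply totL|apply compactL]. Qed.



Definition is_pmax (t : T) (p : Ls) : Prop :=
  le (` p) t /\ forall l : Ls, le (` l) t -> le (` l) (` p).

Definition pi (t : T) : option Ls :=
  match excluded_middle_informative (exists p, is_pmax t p) with
  | left e => Some (proj1_sig (constructive_indefinite_description _ e))
  | right _ => None
  end.

Lemma pi_some t p : pi t = Some p -> is_pmax t p.
Proof.
  unfold pi. destruct (excluded_middle_informative _) as [e|e]; [|discriminate].
  intros h. injection h as <-. exact (proj2_sig (constructive_indefinite_description _ e)).
Qed.

Lemma pmax_unique t p q : is_pmax t p -> is_pmax t q -> p = q.
Proof.
  intros [h1 h2] [k1 k2]. apply sig_eq. apply (le_anti Htot); auto.
Qed.

Lemma pi_exists t (l : Ls) : le (` l) t -> exists p, is_pmax t p.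
Proof.
  intros hl. destruct (closed_has_max Htot Hcomp (C := fun u => L u /\ le u t)) as [m [[hm1 hm2] hm3]].
  - apply closed_and; auto. apply closed_le; auto.
  - exists (` l). split; auto. exact (proj2_sig l).
  - exists (exist _ m hm1). split; simpl; auto. intros l' hl'. apply hm3. split; auto. exact (proj2_sig l').
Qed.

Lemma pi_char t p : is_pmax t p -> pi t = Some p.
Proof.
  intros h. unfold pi. destruct (excluded_middle_informative _) as [e|e].
  - f_equal. apply (pmax_unique (proj2_sig (constructive_indefinite_description _ e)) h).
  - exfalso. eauto.
Qed.

Lemma pi_none t : pi t = None -> forall l : Ls, ~ le (` l) t.
Proof.
  intros h l hl. destruct (pi_exists hl) as [p hp]. rewrite (pi_char hp) in h. discriminate.
Qed.

Lemma pi_in (x : Ls) : pi (` x) = Some x.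
Proof. apply pi_char. split. apply (le_refl Htot). auto. Qed.

Lemma pi_mono s t q : pi s = Some q -> le s t -> exists p, pi t = Some p /\ le (` q) (` p).
Proof.
  intros hs hst. destruct (pi_some hs) as [h1 h2].
  destruct (pi_exists (l := q) (t := t)) as [p hp]. exact (le_trans Htot h1 hst).
  exists p. split. apply pi_char; auto. apply hp. exact (le_trans Htot h1 hst).
Qed.

Definition FK (F : Ls -> R) (t : T) : R := match pi t with Some p => F p | None => 0 end.

Lemma FK_in F (x : Ls) : FK F (` x) = F x.
Proof. unfold FK. rewrite pi_in. auto. Qed.

Lemma cont_trace (f : T -> R) : order_continuous le f -> order_continuous leL (fun x : Ls => f (` x)).
Proof.
  intros hf x eps he. destruct (hf (` x) eps he) as [U [h1 [h2 h3]]].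
  exists (fun y : Ls => U (` y)). split; [apply trace_open; auto|]. split; auto.
Qed.

Lemma FK_rc F : right_continuous leL F -> right_continuous le (FK F).
Proof.
  intros hF t eps he. destruct (classic (is_greatest le t)) as [g|g]; [now left|right].
  destruct (classic (L t)) as [ht|ht].
  - set (x := exist _ t ht : Ls).
    assert (hx : pi t = Some x) by apply (pi_in x).
    destruct (hF x eps he) as [gx|[b [hb1 hb2]]].
    + destruct (not_greatest Htot g) as [b hb]. exists b. split; auto. intros y hy1 hy2.
      assert (pi y = Some x). { apply pi_char. split; auto. intros l hl. apply (gx l). }
      unfold FK. rewrite H, hx. rewrite Rminus_diag, Rabs_R0. auto.
    + exists (` b). split; [apply ltL in hb1; auto|]. intros y hy1 hy2.
      destruct (pi_mono hx hy1) as [p [hp1 hp2]]. unfold FK. rewrite hp1, hx.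
      apply hb2; auto. apply ltL. destruct (pi_some hp1) as [k1 k2]. exact (le_lt_trans Htot k1 hy2).
  - destruct (HL ht) as [_ [gr|[b [hb1 hb2]]]]; [tauto|].
    exists b. split; auto. intros y hy1 hy2.
    assert (FK F y = FK F t).
    { unfold FK. destruct (pi t) as [p|] eqn:hp.
      - destruct (pi_some hp) as [k1 k2].
        assert (pi y = Some p) as ->; auto. apply pi_char. split. exact (le_trans Htot k1 hy1).
        intros l hl. apply k2. destruct (le_or_lt Htot (` l) t) as [h|h]; auto.
        exfalso. apply (hb2 (` l)). apply (lt_le h). exact (le_lt_trans Htot hl hy2). exact (proj2_sig l).
      - destruct (pi y) as [p|] eqn:hq; auto. exfalso. destruct (pi_some hq) as [k1 k2].
        destruct (le_or_lt Htot (` p) t) as [h|h].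
        + exact (pi_none hp h).
        + apply (hb2 (` p)). apply (lt_le h). exact (le_lt_trans Htot k1 hy2). exact (proj2_sig p). }
    rewrite H, Rminus_diag, Rabs_R0. auto.
Qed.

Fixpoint dd (q : Ls) (l : list T) : list Ls :=
  match l with
  | [] => []
  | t :: r => match pi t with
      | Some p => if excluded_middle_informative (p = q) then dd q r else p :: dd p r
      | None => dd q r
      end
  end.

Lemma pi_step prev q t : pi prev = Some q -> lt le prev t -> exists p, pi t = Some p /\ le (` q) (` p).
Proof. intros h1 h2. apply (pi_mono h1 (lt_le h2)). Qed.

Lemma dd_incr l : forall prev q, incr_from le prev l -> pi prev = Some q -> incr_from leL q (dd q l).
Proof.
  induction l as [|t r IH]; intros prev q hi hq; simpl; auto. destruct hi as [h1 h2].
  destruct (pi_step hq h1) as [p [hp hqp]]. rewrite hp.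
  destruct (excluded_middle_informative (p = q)) as [e|e].
  - subst. apply (IH t); auto.
  - split. apply ltL. split; auto. intros e'. apply e, sig_eq; auto.
    apply (IH t); auto.
Qed.

Lemma dd_var F l : forall prev q, incr_from le prev l -> pi prev = Some q ->
  variation_from (FK F) prev l = variation_from F q (dd q l).
Proof.
  induction l as [|t r IH]; intros prev q hi hq; simpl; auto. destruct hi as [h1 h2].
  destruct (pi_step hq h1) as [p [hp hqp]]. unfold FK at 1 2. rewrite hp, hq.
  destruct (excluded_middle_informative (p = q)) as [e|e].
  - subst. rewrite Rminus_diag, Rabs_R0, Rplus_0_l. apply (IH t); auto.
  - simpl. f_equal. apply (IH t); auto.
Qed.

Lemma dd_points l : forall prev q, incr_from le prev l -> pi prev = Some q ->
  forall t, In t l -> forall p, pi t = Some p -> In p (q :: dd q l).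
Proof.
  induction l as [|t r IH]; intros prev q hi hq u hu p hp; simpl in hu; [tauto|]. destruct hi as [h1 h2].
  destruct (pi_step hq h1) as [p' [hp' hqp]]. simpl. rewrite hp'.
  destruct (excluded_middle_informative (p' = q)) as [e|e].
  - subst. destruct hu as [<-|hu].
    + rewrite hp in hp'. injection hp' as ->. simpl; auto.
    + exact (IH t _ h2 hp' u hu p hp).
  - destruct hu as [<-|hu].
    + rewrite hp in hp'. injection hp' as ->. simpl; auto.
    + right. exact (IH t _ h2 hp' u hu p hp).
Qed.

Lemma dd_last l : forall prev q, incr_from le prev l -> pi prev = Some q ->
  forall p, pi (last l prev) = Some p -> last (dd q l) q = p.
Proof.
  induction l as [|t r IH]; intros prev q hi hq p hp.
  - simpl in *. congruence.
  - destruct hi as [h1 h2]. rewrite last_cons in hp.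
    destruct (pi_step hq h1) as [p' [hp' hqp]]. simpl. rewrite hp'.
    destruct (excluded_middle_informative (p' = q)) as [e|e].
    + subst. apply (IH t); auto.
    + rewrite last_cons. apply (IH t); auto.
Qed.

Lemma none_var F M (mL : Ls) : is_least leL mL ->
  (forall t0 l, incr_from leL t0 l -> variation_from F t0 l <= M) ->
  forall l prev, incr_from le prev l -> pi prev = None ->
  variation_from (FK F) prev l <= Rabs (F mL) + 2 * M.
Proof.
  intros hm hM. assert (M0 : 0 <= M) by (apply (hM mL []); simpl; auto).
  induction l as [|t r IH]; intros prev hi hp; simpl. pose proof (Rabs_pos (F mL)); lra.
  destruct hi as [h1 h2]. unfold FK at 2. rewrite hp.
  destruct (pi t) as [p|] eqn:ht.
  - unfold FK at 1. rewrite ht. rewrite (dd_var F h2 ht). rewrite Rminus_0_r.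
    assert (variation_from F p (dd p r) <= M) by (apply hM; apply (dd_incr h2 ht)).
    assert (Rabs (F p) <= Rabs (F mL) + M).
    { destruct (classic (p = mL)) as [e|e]. subst; lra.
      assert (hv := hM mL [p]). simpl in hv. rewrite Rplus_0_r in hv.
      assert (Rabs (F p - F mL) <= M). { apply hv. split; auto. split. apply hm. intros e'; auto. }
      replace (F p) with (F mL + (F p - F mL)) by ring.
      eapply Rle_trans. apply Rabs_triang. lra. }
    lra.
  - unfold FK at 1. rewrite ht. rewrite Rminus_0_r, Rabs_R0, Rplus_0_l. apply (IH t); auto.
Qed.

Lemma FK_bv F : bounded_variation leL F -> bounded_variation le (FK F).
Proof.
  intros [M hM]. destruct (classic (exists x : Ls, True)) as [[x0 _]|ne].
  - destruct (closed_has_min Htot Hcomp (C := L)) as [m [hm1 hm2]]; auto.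
    exists (` x0). exact (proj2_sig x0).
    set (mL := exist _ m hm1 : Ls).
    assert (hmL : is_least leL mL). { intros y. apply hm2. exact (proj2_sig y). }
    assert (M0 : 0 <= M) by (apply (hM mL []); simpl; auto).
    exists (Rabs (F mL) + 2 * M). intros t0 l hi. destruct (pi t0) as [q|] eqn:hq.
    + rewrite (dd_var F hi hq). pose proof (hM q _ (dd_incr hi hq)). pose proof (Rabs_pos (F mL)). lra.
    + apply (none_var hmL hM hi hq).
  - exists 0. intros t0 l _. assert (forall t, FK F t = 0).
    { intros t. unfold FK. destruct (pi t) as [p|]; auto. exfalso. apply ne. eauto. }
    clear -H. revert t0. induction l; intros; simpl; auto. lra. rewrite !H, Rminus_diag, Rabs_R0. specialize (IHl a). lra.
Qed.

Lemma FK_NBV F : NBV leL F -> NBV le (FK F).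
Proof. intros [h1 h2]. split; [apply FK_rc|apply FK_bv]; auto. Qed.

Definition Good (f : T -> R) (eps : R) (S : list T) : Prop :=
  forall a b, (forall s, In s S -> ~ (lt le a s /\ lt le s b)) ->
    forall y z, lt le a y -> le y b -> lt le a z -> le z b -> Rabs (f y - f z) < eps.

Definition diag (l : list Ls) : list (Ls * Ls) := map (fun x => (x, x)) l.

Lemma cell_free S prev t (r : list (T * T)) : tags_ok le t r -> lt le prev t ->
  (forall s, In s S -> le s prev \/ In s (t :: map fst r)) ->
  forall s, In s S -> ~ (lt le prev s /\ lt le s t).
Proof.
  intros h4 h1 hS s hs [k1 k2]. destruct (hS s hs) as [h|[h|h]].
  - exact (lt_not_le Htot k1 h).
  - subst. exact (lt_irrefl k2).
  - pose proof (tags_ok_gt Htot h4 h). exact (lt_not_le Htot k2 (lt_le H)).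
Qed.

Lemma inv_step S prev t (r : list (T * T)) : lt le prev t ->
  (forall s, In s S -> le s prev \/ In s (t :: map fst r)) ->
  (forall s, In s S -> le s t \/ In s (map fst r)).
Proof.
  intros h1 hS s hs. destruct (hS s hs) as [h|[h|h]]; auto.
  - left. exact (le_trans Htot h (lt_le h1)).
  - subst. left. apply (le_refl Htot).
Qed.

Lemma rabs_combine a b d A B e v : Rabs (a - b) < e -> Rabs (A - B) <= e * v ->
  Rabs (a * d + A - (b * d + B)) <= e * (Rabs d + v).
Proof.
  intros h1 h2. replace (a * d + A - (b * d + B)) with ((a - b) * d + (A - B)) by ring.
  eapply Rle_trans. apply Rabs_triang. rewrite Rabs_mult.
  assert (Rabs (a - b) * Rabs d <= e * Rabs d).
  { apply Rmult_le_compat_r. apply Rabs_pos. lra. }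
  lra.
Qed.

Lemma sum_some f F eps S : Good f eps S ->
  forall l prev q, tags_ok le prev l -> pi prev = Some q ->
  (forall s, In s S -> le s prev \/ In s (map fst l)) ->
  Rabs (rs_tail f (FK F) prev l - rs_tail (fun x : Ls => f (` x)) F q (diag (dd q (map fst l))))
    <= eps * variation_from F q (dd q (map fst l)).
Proof.
  intros hG. induction l as [|[t tau] r IH]; intros prev q hl hq hS.
  - simpl. rewrite Rminus_diag, Rabs_R0, Rmult_0_r. lra.
  - destruct hl as [h1 [h2 [h3 h4]]].
    destruct (pi_step hq h1) as [p [hp hqp]].
    simpl. rewrite hp. unfold FK at 1 2. rewrite hp, hq.
    pose proof (inv_step h1 hS) as hS'.
    destruct (excluded_middle_informative (p = q)) as [e|e].
    + subst. rewrite Rminus_diag, Rmult_0_r, Rplus_0_l. apply (IH t); auto.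
    + simpl. apply rabs_combine; [|apply (IH t); auto].
      apply (hG prev t (cell_free h4 h1 hS)); auto.
      * destruct (le_or_lt Htot (` p) prev) as [h|h]; auto. exfalso. apply e.
        destruct (pi_some hq) as [k1 k2]. apply sig_eq. apply (le_anti Htot); auto.
      * apply (pi_some hp).
Qed.

Lemma sum_none f F eps S (mL : Ls) : Good f eps S -> is_least leL mL ->
  forall l prev, tags_ok le prev l -> pi prev = None -> In (` mL) (map fst l) ->
  (forall s, In s S -> le s prev \/ In s (map fst l)) ->
  Rabs (rs_tail f (FK F) prev l - (f (` mL) * F mL + rs_tail (fun x : Ls => f (` x)) F mL (diag (dd mL (map fst l)))))
    <= eps * (Rabs (F mL) + variation_from F mL (dd mL (map fst l))).
Proof.
  intros hG hm. induction l as [|[t tau] r IH]; intros prev hl hq hin hS; [simpl in hin; tauto|].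
  destruct hl as [h1 [h2 [h3 h4]]]. pose proof (inv_step h1 hS) as hS'.
  simpl. unfold FK at 2. rewrite hq. destruct (pi t) as [p|] eqn:hp.
  - assert (et : t = ` mL).
    { destruct (classic (t = ` mL)) as [e|e]; auto. exfalso.
      destruct hin as [hin|hin]; [simpl in hin; congruence|].
      pose proof (tags_ok_gt Htot h4 hin) as k. destruct (pi_some hp) as [k1 k2].
      apply (lt_not_le Htot k). exact (le_trans Htot (hm p) k1). }
    subst t. rewrite pi_in in hp. injection hp as <-.
    destruct (excluded_middle_informative (mL = mL)) as [_|n]; [|tauto].
    unfold FK at 1. rewrite pi_in. rewrite Rminus_0_r.
    apply rabs_combine.
    + apply (hG prev (` mL) (cell_free h4 h1 hS)); auto; apply (le_refl Htot).
    + apply (sum_some F hG h4 (pi_in mL)); auto.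
  - assert (hin' : In (` mL) (map fst r)).
    { destruct hin as [hin|hin]; auto. simpl in hin. subst. rewrite pi_in in hp. discriminate. }
    unfold FK at 1. rewrite hp. rewrite Rminus_diag, Rmult_0_r, Rplus_0_l. apply (IH t); auto.
Qed.

Lemma dd_none (mL : Ls) : is_least leL mL -> forall l prev, incr_from le prev l -> pi prev = None ->
  In (` mL) l -> exists l', incr_from le (` mL) l' /\ dd mL l = dd mL l' /\
    (forall t, In t l -> pi t = None \/ t = ` mL \/ In t l') /\ last l prev = last l' (` mL).
Proof.
  intros hm. induction l as [|t r IH]; intros prev hi hq hin; [simpl in hin; tauto|].
  destruct hi as [h1 h2]. destruct (pi t) as [p|] eqn:hp.
  - assert (et : t = ` mL).
    { destruct (classic (t = ` mL)) as [e|e]; auto. exfalso.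
      destruct hin as [hin|hin]; [congruence|].
      pose proof (incr_gt Htot h2 hin) as k. destruct (pi_some hp) as [k1 k2].
      apply (lt_not_le Htot k). exact (le_trans Htot (hm p) k1). }
    subst t. rewrite pi_in in hp. injection hp as <-.
    exists r. split; auto. split.
    + simpl. rewrite pi_in. destruct (excluded_middle_informative (mL = mL)) as [_|n]; [auto|tauto].
    + split. intros u [<-|hu]; auto. rewrite last_cons. auto.
  - assert (hin' : In (` mL) r).
    { destruct hin as [hin|hin]; auto. subst. rewrite pi_in in hp. discriminate. }
    destruct (IH t h2 hp hin') as [l' [k1 [k2 [k3 k4]]]].
    exists l'. split; auto. split. simpl. rewrite hp. auto. split.
    + intros u [<-|hu]; auto.
    + rewrite last_cons. auto.
Qed.

Lemma tags_incr l : forall prev, tags_ok le prev l -> incr_from le prev (map fst l).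
Proof. induction l as [|[t tau] r IH]; intros prev h; simpl in *; auto. destruct h as [h1 [_ [_ h4]]]. split; auto. Qed.

Lemma map_fst_diag (l : list Ls) : map fst (diag l) = l.
Proof. unfold diag. rewrite map_map. simpl. apply map_id. Qed.

Lemma map_fst_diagT (l : list T) : map fst (map (fun x => (x, x)) l) = l.
Proof. rewrite map_map. simpl. apply map_id. Qed.

Lemma FK_integral f F v : order_continuous le f -> bounded_variation leL F -> (exists x : Ls, True) ->
  is_rs_integral leL (fun x : Ls => f (` x)) F v -> is_rs_integral le f (FK F) v.
Proof.
  intros hf [M hM] [x0 _] hI eps he.
  destruct (closed_has_min Htot Hcomp (C := L)) as [m [hm1 hm2]]; auto.
  { exists (` x0). exact (proj2_sig x0). }
  set (mL := exist _ m hm1 : Ls).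
  assert (hmL : is_least leL mL). { intros y. apply hm2. exact (proj2_sig y). }
  assert (M0 : 0 <= M) by (apply (hM mL []); simpl; auto).
  set (D := Rabs (F mL) + M + 1).
  assert (hD : 0 < D) by (pose proof (Rabs_pos (F mL)); unfold D; lra).
  set (eps' := eps / (2 * D)).
  assert (he' : 0 < eps') by (unfold eps'; apply Rdiv_lt_0_compat; lra).
  assert (hbound : eps' * (Rabs (F mL) + M) < eps / 2).
  { assert (eps' * D = eps / 2) by (unfold eps'; field; lra).
    assert (eps' * (Rabs (F mL) + M) < eps' * D) by (apply Rmult_lt_compat_l; auto; unfold D; lra). lra. }
  destruct (osc_partition Htot Hcomp hf he') as [S hS].
  destruct (hI (eps / 2)) as [s0 [l0 [hP0 hR0]]]; [lra|].
  destruct (closed_has_min Htot Hcomp (C := fun _ => True)) as [k0 [_ hk0]]; [apply closed_full; auto|exists m; auto|].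
  destruct (closed_has_max Htot Hcomp (C := fun _ => True)) as [K0 [_ hK0]]; [apply closed_full; auto|exists m; auto|].
  destruct (@exist_pts _ _ Htot k0 K0 (S ++ [m] ++ map (fun x : Ls => ` x) (partition_points s0 l0)))
    as [pts [hp1 [hp2 hp3]]]; [intros y; auto|intros y; auto|].
  exists k0, (map (fun x => (x, x)) pts). split.
  { split; [intros y; auto|]. split; [apply tags_diag; auto|].
    rewrite map_fst_diagT, last_cons, hp3. intros y; auto. }
  intros t1 l1 [ht1 [htags hlast]] href.
  assert (hsub : forall y, In y (S ++ [m] ++ map (fun x : Ls => ` x) (partition_points s0 l0)) ->
                 y = t1 \/ In y (map fst l1)).
  { intros y hy. destruct (hp2 y hy) as [e|e].
    - subst. assert (In k0 (partition_points t1 l1)) by (apply href; simpl; auto).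
      destruct H; auto.
    - assert (In y (partition_points t1 l1)).
      { apply href. simpl. right. rewrite map_fst_diagT. auto. }
      destruct H; auto. }
  assert (hSinv : forall s, In s S -> le s t1 \/ In s (map fst l1)).
  { intros s hs. destruct (hsub s) as [e|e]; auto. apply in_or_app; auto.
    left. subst. apply (le_refl Htot). }
  assert (hmin : In m (t1 :: map fst l1)).
  { destruct (hsub m) as [e|e]. apply in_or_app. right. simpl; auto. left; auto. right; auto. }
  assert (hP0pts : forall x : Ls, In x (partition_points s0 l0) -> In (` x) (t1 :: map fst l1)).
  { intros x hx. destruct (hsub (` x)) as [e|e].
    - apply in_or_app. right. right. apply in_map. auto.
    - left; auto.
    - right; auto. }
  set (gf := fun x : Ls => f (` x)).
  assert (hgreat : is_greatest le (last (map fst l1) t1)).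
  { rewrite <- last_cons with (d := t1). exact hlast. }
  assert (hpg : forall p, pi (last (map fst l1) t1) = Some p -> is_greatest leL p).
  { intros p hp y. destruct (pi_some hp) as [k1 k2]. apply k2. apply hgreat. }
  assert (hpiex : exists p, pi (last (map fst l1) t1) = Some p).
  { destruct (pi_exists (l := mL) (t := last (map fst l1) t1)) as [p hp]. apply hgreat.
    exists p. apply pi_char; auto. }
  destruct hpiex as [pl hpl].
  set (Dl := dd mL (map fst l1)).
  assert (hLpart : tagged_partition leL mL (diag Dl) /\
          (forall x, In x (partition_points s0 l0) -> In x (partition_points mL (diag Dl)))).
  { unfold partition_points. rewrite map_fst_diag.
    destruct (pi t1) as [q|] eqn:hq.
    - assert (eq : q = mL).
      { destruct (pi_some hq) as [k1 k2]. apply sig_eq. apply (le_anti Htot). exact (le_trans Htot k1 (ht1 _)). apply hmL. }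
      subst q. pose proof (tags_incr htags) as hi.
      split; [split; [auto|split]|].
      + apply tags_diag. apply totL. apply (dd_incr hi hq).
      + rewrite map_fst_diag, last_cons. unfold Dl. rewrite (dd_last hi hq hpl). apply hpg; auto.
      + intros x hx. pose proof (hP0pts x hx) as hx'. destruct hx' as [e|e].
        * rewrite e in hq. rewrite pi_in in hq. injection hq as ->. simpl; auto.
        * apply (dd_points hi hq e (pi_in x)).
    - pose proof (tags_incr htags) as hi.
      assert (hin : In m (map fst l1)).
      { destruct hmin as [e|e]; auto. exfalso. subst. change (pi (` mL) = None) in hq. rewrite pi_in in hq. discriminate. }
      destruct (dd_none hmL hi hq hin) as [l' [k1 [k2 [k3 k4]]]].
      unfold Dl. rewrite k2. pose proof (pi_in mL) as hmm.
      split; [split; [auto|split]|].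
      + apply tags_diag. apply totL. apply (dd_incr k1 hmm).
      + rewrite map_fst_diag, last_cons. rewrite k4 in hpl. rewrite (dd_last k1 hmm hpl). apply hpg. rewrite k4; auto.
      + intros x hx. pose proof (hP0pts x hx) as hx'. destruct hx' as [e|e].
        * exfalso. rewrite e in hq. rewrite pi_in in hq. discriminate.
        * destruct (k3 _ e) as [e'|[e'|e']].
          -- rewrite pi_in in e'. discriminate.
          -- left. apply sig_eq. auto.
          -- apply (dd_points k1 hmm e' (pi_in x)). }
  destruct hLpart as [hLp hLr].
  pose proof (hR0 mL (diag Dl) hLp hLr) as hclose.
  assert (hvar : variation_from F mL Dl <= M).
  { apply hM. destruct hLp as [_ [hLp _]]. clear -hLp. unfold diag in hLp. revert hLp. generalize mL.
    induction Dl as [|x r IH]; intros y h; simpl in *; auto. destruct h as [h1 [_ [_ h4]]]. split; auto. }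
  assert (hdiff : Rabs (rs_sum f (FK F) t1 l1 - rs_sum gf F mL (diag Dl)) <= eps' * (Rabs (F mL) + M)).
  { unfold rs_sum. destruct (pi t1) as [q|] eqn:hq.
    - assert (eq : q = mL).
      { destruct (pi_some hq) as [k1 k2]. apply sig_eq. apply (le_anti Htot). exact (le_trans Htot k1 (ht1 _)). apply hmL. }
      subst q. assert (et : t1 = m).
      { destruct (pi_some hq) as [k1 k2]. apply (le_anti Htot); [apply ht1|exact k1]. }
      unfold FK at 1. rewrite hq. unfold gf. change (` mL) with m. rewrite <- et.
      replace (f t1 * F mL + rs_tail f (FK F) t1 l1 - (f t1 * F mL + rs_tail (fun x : Ls => f (` x)) F mL (diag Dl)))
        with (rs_tail f (FK F) t1 l1 - rs_tail (fun x : Ls => f (` x)) F mL (diag Dl)) by ring.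
      eapply Rle_trans. apply (sum_some F hS htags hq hSinv).
      apply Rmult_le_compat_l; [lra|]. fold Dl. pose proof (Rabs_pos (F mL)). lra.
    - assert (hin : In m (map fst l1)).
      { destruct hmin as [e|e]; auto. exfalso. subst. change (pi (` mL) = None) in hq. rewrite pi_in in hq. discriminate. }
      unfold FK at 1. rewrite hq. rewrite Rmult_0_r, Rplus_0_l.
      eapply Rle_trans. apply (sum_none F hS hmL htags hq hin hSinv).
      apply Rmult_le_compat_l; [lra|]. fold Dl. lra. }
  unfold gf in hdiff.
  replace (rs_sum f (FK F) t1 l1 - v) with
    ((rs_sum f (FK F) t1 l1 - rs_sum (fun x : Ls => f (` x)) F mL (diag Dl)) + (rs_sum (fun x : Ls => f (` x)) F mL (diag Dl) - v)) by ring.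
  eapply Rle_lt_trans. apply Rabs_triang. lra.
Qed.

Lemma FK_wsn I (F : I -> Ls -> R) : (forall i, NBV leL (F i)) -> weak_star_null leL F ->
  (exists x : Ls, True) -> weak_star_null le (fun i => FK (F i)).
Proof.
  intros hN hW hne f hf. destruct (hW (fun x => f (` x)) (cont_trace hf)) as [a [ha hc]].
  exists a. split; auto. intros i. apply FK_integral; auto. apply (proj2 (hN i)).
Qed.

Lemma H_between (H : T -> Prop) t s' : order_closed le H -> H t -> ~ right_isolated_in le H t ->
  lt le t s' -> exists h, H h /\ lt le t h /\ lt le h s'.
Proof.
  intros hH ht hri hts. apply NNPP. intros hno.
  assert (hno' : forall h, H h -> lt le t h -> le s' h).
  { intros h h1 h2. destruct (le_or_lt Htot s' h) as [k|k]; auto. exfalso. apply hno. eauto. }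
  assert (hnm : ~ (forall y, H y -> le y t)).
  { intros hm. apply hri. split; auto. }
  apply not_all_ex_not in hnm as [h0 hh0]. apply imply_to_and in hh0 as [hh0 hh0'].
  apply (not_le_lt Htot) in hh0'.
  destruct (closed_has_min Htot Hcomp (C := fun y => H y /\ le s' y)) as [m [[hm1 hm2] hm3]].
  - apply closed_and; auto. apply closed_ge; auto.
  - exists h0. split; auto.
  - apply hri. split; auto. right. exists m. split; auto. split. exact (lt_le_trans Htot hts hm2).
    intros [u [hu1 [hu2 hu3]]]. apply (lt_not_le Htot hu3). apply hm3. split; auto.
Qed.

Lemma countable_rel {A B : Type} (D : A -> Prop) (D' : B -> Prop) (Rl : A -> B -> Prop) :
  countable_set D -> (forall y, D' y -> exists d, D d /\ Rl d y) ->
  (forall d y y', Rl d y -> Rl d y' -> D' y -> D' y' -> y = y') -> countable_set D'.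
Proof.
  intros [g hg] hex huniq.
  exists (fun y => match excluded_middle_informative (exists d, D d /\ Rl d y) with
          | left e => g (proj1_sig (constructive_indefinite_description _ e))
          | right _ => 0%nat end).
  intros y y' hy hy'.
  destruct (excluded_middle_informative (exists d, D d /\ Rl d y)) as [e|e]; [|exfalso; auto].
  destruct (excluded_middle_informative (exists d, D d /\ Rl d y')) as [e'|e']; [|exfalso; auto].
  destruct (constructive_indefinite_description _ e) as [d [hd1 hd2]].
  destruct (constructive_indefinite_description _ e') as [d' [hd1' hd2']]. simpl.
  intros hgd. pose proof (hg d d' hd1 hd1' hgd). subst d'. eapply huniq; eauto.
Qed.

Lemma countable_union {A : Type} (S1 S2 S : A -> Prop) : countable_set S1 -> countable_set S2 ->
  (forall t, S t -> S1 t \/ S2 t) -> countable_set S.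
Proof.
  intros [g1 h1] [g2 h2] hS.
  exists (fun t => if excluded_middle_informative (S1 t) then (2 * g1 t)%nat else (2 * g2 t + 1)%nat).
  intros x y hx hy.
  destruct (excluded_middle_informative (S1 x)) as [a|a];
  destruct (excluded_middle_informative (S1 y)) as [b|b]; intros e.
  - apply h1; auto. lia.
  - exfalso. lia.
  - exfalso. lia.
  - apply h2; auto. destruct (hS x hx); [tauto|]. auto. destruct (hS y hy); [tauto|]. auto. lia.
Qed.

Section Count.
Variables (H D : T -> Prop).
Hypothesis hHc : order_closed le H.
Hypothesis hDH : forall x, D x -> H x.
Hypothesis hDc : countable_set D.
Hypothesis hHD : forall x, H x -> order_closure le D x.

Definition PG t d := D d /\ lt le t d /\ forall l : Ls, lt le t (` l) -> ~ le (` l) d.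

Lemma gap_exists t : H t -> ~ right_isolated_in le H t -> right_isolated_in le L t -> exists d, PG t d.
Proof.
  intros ht hri [hLt [hmax|[s [hs1 [hs2 hs3]]]]].
  - assert (hnm : ~ (forall y, H y -> le y t)). { intros hm. apply hri. split; auto. }
    apply not_all_ex_not in hnm as [h0 hh0]. apply imply_to_and in hh0 as [hh0 hh0'].
    apply (not_le_lt Htot) in hh0'.
    destruct (hHD hh0 (@open_gt _ _ Htot t) hh0') as [d [hd1 hd2]].
    exists d. split; auto. split; auto. intros l hl1 hl2. apply (lt_not_le Htot hl1). apply hmax. exact (proj2_sig l).
  - destruct (H_between hHc ht hri hs2) as [h [k1 [k2 k3]]].
    destruct (hHD k1 (open_and Htot (@open_gt _ _ Htot t) (@open_lt _ _ Htot s)) (conj k2 k3)) as [d [hd1 [hd2 hd3]]].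
    exists d. split; auto. split; auto. intros l hl1 hl2. apply hs3. exists (` l). split. exact (proj2_sig l).
    split; auto. exact (le_lt_trans Htot hl2 hd3).
Qed.

Lemma gap_inj d t t' : PG t d -> PG t' d -> L t -> L t' -> t = t'.
Proof.
  intros [_ [h1 h2]] [_ [h1' h2']] ht ht'.
  destruct (le_or_lt Htot t t') as [k|k].
  - destruct (classic (t = t')) as [e|e]; auto. exfalso.
    apply (h2 (exist _ t' ht')); simpl. split; auto. apply (lt_le h1').
  - exfalso. apply (h2' (exist _ t ht)); simpl; auto. apply (lt_le h1).
Qed.

Definition Dp (y : Ls) : Prop := exists d, D d /\ le d (` y) /\ forall l : Ls, le d (` l) -> le (` y) (` l).
Definition Hp : Ls -> Prop := order_closure leL Dp.

Lemma Hp_closed : order_closed leL Hp.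
Proof. apply closure_closed. Qed.

Lemma Hp_sep : separable_set leL Hp.
Proof.
  exists Dp. split; [intros x hx; apply closure_incl; auto|]. split; [|intros x hx; exact hx].
  apply (countable_rel (D := D) (Rl := fun d y => le d (` y) /\ forall l : Ls, le d (` l) -> le (` y) (` l))); auto.
  intros d y y' [a1 a2] [b1 b2] _ _. apply sig_eq. apply (le_anti Htot); auto.
Qed.

Lemma lim_case (x : Ls) : H (` x) -> ~ right_isolated_in le H (` x) -> ~ right_isolated_in le L (` x) ->
  Hp x /\ ~ right_isolated_in leL Hp x.
Proof.
  intros ht hri hrL.
  assert (hC : forall s : Ls, lt le (` x) (` s) -> exists y, Dp y /\ lt le (` x) (` y) /\ lt le (` y) (` s)).
  { intros s hs. assert (hu : exists u, L u /\ lt le (` x) u /\ lt le u (` s)).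
    { apply NNPP. intros hn. apply hrL. split. exact (proj2_sig x). right. exists (` s). split; auto. exact (proj2_sig s). }
    destruct hu as [u [hu1 [hu2 hu3]]].
    destruct (H_between hHc ht hri hu2) as [h [k1 [k2 k3]]].
    destruct (hHD k1 (open_and Htot (@open_gt _ _ Htot (` x)) (@open_lt _ _ Htot u)) (conj k2 k3)) as [d [hd1 [hd2 hd3]]].
    destruct (closed_has_min Htot Hcomp (C := fun y => L y /\ le d y)) as [m [[hm1 hm2] hm3]].
    - apply closed_and; auto. apply closed_ge; auto.
    - exists u. split; auto. apply (lt_le hd3).
    - exists (exist _ m hm1). simpl. split.
      + exists d. split; auto. split; auto. intros l hl. apply hm3. split; auto. exact (proj2_sig l).
      + split. exact (lt_le_trans Htot hd2 hm2).
        apply (le_lt_trans Htot (y := u)); auto. apply hm3. split; auto. apply (lt_le hd3). }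
  assert (hs0 : exists s : Ls, lt le (` x) (` s)).
  { apply NNPP. intros hn. apply hrL. split. exact (proj2_sig x). left. intros y hy.
    destruct (le_or_lt Htot y (` x)) as [k|k]; auto. exfalso. apply hn. exists (exist _ y hy). auto. }
  destruct hs0 as [s0 hs0].
  assert (hx : Hp x).
  { intros U hU hUx. destruct (hU x hUx) as [_ [hg|[b [hb1 hb2]]]].
    - exfalso. apply (lt_not_le Htot hs0). apply (hg s0).
    - apply ltL in hb1. destruct (hC b hb1) as [y [hy1 [hy2 hy3]]]. exists y. split; auto.
      apply hb2. apply (lt_le hy2). apply ltL; auto. }
  split; auto. intros [_ [hmax|[s [hs1 [hs2 hs3]]]]].
  - destruct (hC s0 hs0) as [y [hy1 [hy2 hy3]]]. apply (lt_not_le Htot hy2). apply (hmax y). apply closure_incl; auto.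
  - apply ltL in hs2. destruct (hC s hs2) as [y [hy1 [hy2 hy3]]]. apply hs3. exists y. split. apply closure_incl; auto.
    split; apply ltL; auto.
Qed.

End Count.

Lemma sum_abs_map (b : T -> R) (l : list Ls) : sum_abs (fun x : Ls => b (` x)) l = sum_abs b (map (fun x : Ls => ` x) l).
Proof. induction l; simpl; auto. rewrite IHl. auto. Qed.

Lemma nodup_map_proj (l : list Ls) : NoDup l -> NoDup (map (fun x : Ls => ` x) l).
Proof.
  induction 1; simpl; constructor; auto.
  intros hin. apply in_map_iff in hin as [y [e hy]]. apply sig_eq in e. subst. auto.
Qed.

Lemma sd_L : separably_determined le -> separably_determined leL.
Proof.
  intros hsd I F hN hW Q hyp.
  destruct (classic (exists x : Ls, True)) as [hne|hne].
  2:{ exists (fun _ _ => 0), (fun _ _ => 0). split; [intros i t; exfalso; eauto|].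
      split; [intros t; exfalso; eauto|]. exists 0. intros i l _ _. destruct l as [|x l]; simpl. lra. exfalso; eauto. }
  set (QK := fun t => exists x : Ls, ` x = t /\ Q x).
  destruct (hsd I (fun i => FK (F i)) (fun i => FK_NBV (hN i)) (FK_wsn hN hW hne) QK) as [a [b [h1 [h2 [M h3]]]]].
  - intros H hHc [D [hDH [hDc hHD]]].
    set (Gap := fun t => L t /\ exists d, PG D t d).
    set (SL := fun x : Ls => Q x /\ Hp D x /\ ~ right_isolated_in leL (Hp D) x /\ ~ c0 (fun i => F i x)).
    assert (cG : countable_set Gap).
    { apply (countable_rel (D := D) (Rl := fun d t => L t /\ PG D t d)); auto.
      - intros t [ht [d hd]]. exists d. split; auto. apply (proj1 hd).
      - intros d t t' [k1 k2] [k1' k2'] _ _. apply (gap_inj k2 k2'); auto. }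
    assert (cSL : countable_set SL) by (apply hyp; [apply Hp_closed|apply (Hp_sep hDc)]).
    assert (cSL' : countable_set (fun t => exists x : Ls, ` x = t /\ SL x)).
    { apply (countable_rel (D := SL) (Rl := fun x t => ` x = t)); auto.
      - intros t [x [e hx]]. eauto.
      - intros x t t' e e' _ _. congruence. }
    apply (countable_union cG cSL').
    intros t [[x [ex hQ]] [ht [hri hc]]]. subst t.
    destruct (classic (right_isolated_in le L (` x))) as [hrL|hrL].
    + left. split. exact (proj2_sig x). apply (gap_exists hHc hHD ht hri hrL).
    + right. exists x. split; auto. destruct (lim_case hHc hHD ht hri hrL) as [k1 k2].
      split; auto. split; auto. split; auto.
      intros hc'. apply hc. replace (fun i => FK (F i) (` x)) with (fun i => F i x); auto.
      apply functional_extensionality. intros i. rewrite FK_in. auto.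
  - exists (fun i x => a i (` x)), (fun i x => b i (` x)). split; [|split].
    + intros i x hx. rewrite <- (FK_in (F i) x). apply h1. exists x; auto.
    + intros x hx. apply h2. exists x; auto.
    + exists M. intros i l hnd hl. rewrite sum_abs_map. apply h3.
      apply nodup_map_proj; auto.
      intros t ht. apply in_map_iff in ht as [x [e hx]]. exists x. auto.
Qed.

End Sub.

Theorem proposition3p9 (T : Type) (le : T -> T -> Prop) (L : T -> Prop) :
  compact_line le -> separably_determined le -> order_closed le L ->
  compact_line (induced le L) /\ separably_determined (induced le L).
Proof.
  intros [Htot Hcomp] hsd hL. split.
  - apply (compact_line_L Htot Hcomp hL).
  - apply (sd_L Htot Hcomp hL hsd).
Qed.
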